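(* Let $\sigma$ be a full-rank $d$-dimensional quantum state with eigendecomposition $\sigma=\sum_{i=1}^dq(i)\,|e_i\rangle\langle e_i|$ and minimum eigenvalue $\gamma=\min_iq(i)$. Let $\rho_1,\dots,\rho_T$ ($T\ge2$) be $d$-dimensional states, $\varrho=\rho_1\otimes\cdots\otimes\rho_T$, $\rho=\frac1T\sum_t\rho_t$, and $\mu=D_{\chi^2}(\rho\,\|\,\sigma)$. Define the observable $C=\sum_{i,j=1}^d\frac{|e_je_i\rangle\langle e_ie_j|}{q(i,j)}$ on $(\mathbb C^d)^{\otimes2}$ with $q(i,j)=\frac{q(i)+q(j)}2$, let $C_{st}$ denote $C$ applied to the $s$th and $t$th tensor components of $(\mathbb C^d)^{\otimes T}$, and let $M=\frac{T-1}T\Big(\binom T2^{-1}\sum_{1\le s<t\le T}C_{st}-I\Big)$. Then $$\big|\mathbb E_\varrho[M]-\mu\big|\le\sqrt{\frac d{\gamma T}}\sqrt\mu+\frac{d-1}T.$$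
   Context: $\mathbb E_\varrho[Y]=\mathrm{Tr}[\varrho Y]$. Bures $\chi^2$-divergence: writing $\sigma=U\,\mathrm{diag}(q_1,\dots,q_d)U^\dagger$ and $\rho'=U^\dagger\rho U$, $D_{\chi^2}(\rho\,\|\,\sigma)=\sum_{i,j}\frac{2}{q_i+q_j}|\rho'_{ij}|^2-1$. *)

(* Defs.v *)
From HB Require Import structures.
From mathcomp Require Import all_boot all_order all_algebra.
From mathcomp Require Import complex sesquilinear spectral.
From mathcomp Require Import reals.
Set Implicit Arguments. Unset Strict Implicit. Unset Printing Implicit Defensive.
Import Order.TTheory GRing.Theory Num.Theory.
Local Open Scope ring_scope.
Local Open Scope sesquilinear_scope.

Section QuantumDefs.
Variable R : realType.
Local Notation C := R[i].

Definition adjmx m n (A : 'M[C]_(m, n)) : 'M[C]_(n, m) := A ^t*.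

Definition is_state n (A : 'M[C]_n) : Prop :=
  [/\ adjmx A = A,
      (forall v : 'cV[C]_n, 0 <= (adjmx v *m A *m v) 0 0) & \tr A = 1].

(* Bures chi^2 divergence, computed in the eigenbasis (columns of U) of
   sigma = U diag(q) U^dagger:  sum_{i,j} 2/(q_i+q_j) |rho'_{ij}|^2 - 1,
   with rho' = U^dagger rho U. *)
Definition chi2_div d (U : 'M[C]_d) (q : 'I_d -> R) (rho : 'M[C]_d) : R :=
  let rho' := adjmx U *m rho *m U in
  \sum_(i < d) \sum_(j < d) 2 / (q i + q j) * (ComplexField.Normc.normc (rho' i j)) ^+ 2 - 1.

(* Computational basis of (C^d)^{(x)T}: indexed by T-tuples of 'I_d.
   Operators on (C^d)^{(x)T} are given by their matrix entries <x|A|y>. *)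
Definition tidx d T := {ffun 'I_T -> 'I_d}.
Definition top d T := tidx d T -> tidx d T -> C.

Definition tensor_state d T (rho : 'I_T -> 'M[C]_d) : top d T :=
  fun x y => \prod_(t < T) rho t (x t) (y t).

Definition expect d T (vr Y : top d T) : C :=
  \sum_(x : tidx d T) \sum_(y : tidx d T) vr x y * Y y x.

(* entries of C = sum_{i,j} |e_j e_i><e_i e_j| / q(i,j) on (C^d)^{(x)2},
   q(i,j) = (q i + q j)/2, e_i = i-th column of U:
   <a b| C |c e> *)
Definition Cop2 d (U : 'M[C]_d) (q : 'I_d -> R) (a b c e : 'I_d) : C :=
  \sum_(i < d) \sum_(j < d)
     U a j * U b i * Num.conj (U c i) * Num.conj (U e j) / (((q i + q j) / 2)%:C)%C.

(* C acting on the s-th and t-th tensor factors (identity elsewhere) *)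
Definition Cst d T (U : 'M[C]_d) (q : 'I_d -> R) (s t : 'I_T) : top d T :=
  fun x y => Cop2 U q (x s) (x t) (y s) (y t) *
             (if [forall r, ((r != s) && (r != t)) ==> (x r == y r)] then 1 else 0).

Definition idop d T : top d T := fun x y => if x == y then 1 else 0.

Definition Mop d T (U : 'M[C]_d) (q : 'I_d -> R) : top d T :=
  fun x y => ((T%:R - 1) / T%:R) *
    ((('C(T, 2))%:R)^-1 * (\sum_(s < T) \sum_(t < T | (s < t)%N) Cst U q s t x y)
     - idop x y).

End QuantumDefs.

(* Main.v *)
Set Warnings "-notation-overridden,-ambiguous-paths,-notation-incompatible-prefix".
Require Import Defs.
From HB Require Import structures.
From mathcomp Require Import all_boot all_order all_algebra.
From mathcomp Require Import complex sesquilinear spectral.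
From mathcomp Require Import reals.
From mathcomp Require Import ring lra.
Import Order.TTheory GRing.Theory Num.Theory.
Set Implicit Arguments. Unset Strict Implicit. Unset Printing Implicit Defensive.
Local Open Scope ring_scope.
Section RealPart.
Variable R : realType.

Lemma cs_weighted n (w z : 'I_n -> R) : (forall i, 0 <= w i) ->
  (\sum_i w i * z i) ^+ 2 <= (\sum_i w i) * (\sum_i w i * z i ^+ 2).
Proof.
move=> w0.
have H : 0 <= \sum_i \sum_j w i * w j * (z i - z j) ^+ 2.
  by apply: sumr_ge0 => i _; apply: sumr_ge0 => j _; rewrite mulr_ge0 ?sqr_ge0 ?mulr_ge0.
have E : \sum_i \sum_j w i * w j * (z i - z j) ^+ 2 =
  2 * ((\sum_i w i) * (\sum_i w i * z i ^+ 2) - (\sum_i w i * z i) * (\sum_i w i * z i)).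
  rewrite !big_distrlr /= mulrBr !mulr_sumr -sumrB.
  under [RHS]eq_bigr => i _ do rewrite !mulr_sumr -sumrB.
  pose Y i j := w i * (w j * z j ^+ 2) - w i * z i * (w j * z j).
  transitivity (\sum_i \sum_j (Y i j + Y j i)).
    by apply: eq_bigr => i _; apply: eq_bigr => j _; rewrite /Y; ring.
  transitivity (\sum_i \sum_j Y i j + \sum_i \sum_j Y j i).
    by rewrite -big_split; apply: eq_bigr => i _; rewrite big_split.
  rewrite [X in _ + X]exchange_big /= -mulr2n -sumrMnl.
  apply: eq_bigr => i _; rewrite -sumrMnl; apply: eq_bigr => j _; rewrite /Y; ring.
rewrite E in H; rewrite -subr_ge0 expr2; move: H; rewrite pmulr_rge0 //.
Qed.

Lemma sum_ge1 n (q x : 'I_n -> R) : (forall i, 0 < q i) -> \sum_i q i = 1 ->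
  \sum_i x i = 1 -> 1 <= \sum_i x i ^+ 2 / q i.
Proof.
move=> qp sq sx.
have := @cs_weighted _ q (fun i => x i / q i) (fun i => ltW (qp i)).
rewrite sq mul1r.
have -> : \sum_i q i * (x i / q i) = 1.
  by rewrite -sx; apply: eq_bigr => i _; field; rewrite gt_eqF.
rewrite expr1n.
have -> // : \sum_i q i * (x i / q i) ^+ 2 = \sum_i x i ^+ 2 / q i.
by apply: eq_bigr => i _; field; rewrite gt_eqF.
Qed.

Lemma le_x_sqrt (x : R) : 0 <= x <= 1 -> x <= Num.sqrt x.
Proof.
case/andP=> x0 x1.
rewrite -{1}(ger0_norm x0) -sqrtr_sqr ler_sqrt //.
by rewrite expr2 ler_piMr.
Qed.

Lemma final_real (d T : nat) (q : 'I_d -> R) (g : R) (D : 'I_T -> 'I_d -> R)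
  (N : 'I_T -> R) (mu : R) :
 (2 <= T)%N -> 0 < g -> (forall i, g <= q i) -> \sum_i q i = 1 ->
 (forall t, \sum_i D t i = 1) ->
 (forall t, \sum_i D t i ^+ 2 / q i <= N t) ->
 (forall t, N t <= \sum_i D t i / q i) ->
 \sum_i (T%:R^-1 * \sum_t D t i) ^+ 2 / q i <= mu + 1 ->
 `| T%:R^-1 - (\sum_t N t) / T%:R ^+ 2 |
   <= Num.sqrt (d%:R / (g * T%:R)) * Num.sqrt mu + (d%:R - 1) / T%:R.
Proof.
move=> T2 g0 hg sq sD hNl hNu hmu.
have qp i : 0 < q i := lt_le_trans g0 (hg i).
have qn i : q i != 0 by rewrite gt_eqF.
have Tp : 0 < T%:R :> R by rewrite ltr0n; case: T T2 {sD hNl hNu hmu D N}.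
have Tn : T%:R != 0 :> R by rewrite gt_eqF.
have T1 : 1 <= T%:R :> R by rewrite ler1n; case: T T2 {sD hNl hNu hmu D N Tp Tn}.
set Db := fun i => T%:R^-1 * \sum_t D t i.
have sDb : \sum_i Db i = 1.
  rewrite /Db -mulr_sumr exchange_big /=.
  under eq_bigr => t _ do rewrite sD.
  by rewrite sumr_const card_ord -[_ *+ _]mulr_natl mulr1 mulVf.
have Nge1 t : 1 <= N t by apply: le_trans (hNl t); apply: sum_ge1.
have sNge : T%:R <= \sum_t N t.
  have -> : T%:R = \sum_(t < T) (1 : R) by rewrite sumr_const card_ord.
  by apply: ler_sum => t _.
have sNle : \sum_t N t <= T%:R * \sum_i Db i / q i.
  apply: le_trans (ler_sum _ (fun t _ => hNu t)) _.
  rewrite exchange_big /= mulr_sumr le_eqVlt; apply/orP; left; apply/eqP.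
  apply: eq_bigr => i _; rewrite /Db /= -mulr_suml; field.
  by apply/andP; split.
have mu0 : 0 <= mu.
  by have := @sum_ge1 _ q Db qp sq sDb; move=> h; have := le_trans h hmu; rewrite lerDr.
set S := \sum_i (q i)^-1 * (Db i - q i).
have CS2 : S ^+ 2 <= (\sum_i (q i)^-1) * (\sum_i (q i)^-1 * (Db i - q i) ^+ 2).
  by apply: cs_weighted => i; rewrite invr_ge0 ltW.
have V : \sum_i (q i)^-1 * (Db i - q i) ^+ 2 = \sum_i Db i ^+ 2 / q i - 1.
  transitivity (\sum_i (Db i ^+ 2 / q i - 2 * Db i + q i)).
    by apply: eq_bigr => i _; field.
  by rewrite big_split sumrB /= sq -mulr_sumr sDb; ring.
have W : \sum_i (q i)^-1 <= d%:R / g.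
  have -> : d%:R / g = \sum_(i < d) g^-1 by rewrite sumr_const card_ord mulr_natl.
  by apply: ler_sum => i _; rewrite lef_pV2 ?posrE.
have SV : S ^+ 2 <= d%:R / g * mu.
  apply: le_trans CS2 _; rewrite V; apply: ler_pM.
  - by apply: sumr_ge0 => i _; rewrite invr_ge0 ltW.
  - by rewrite subr_ge0 (@sum_ge1 _ q Db qp sq sDb).
  - exact: W.
  - by rewrite lerBlDr.
have Sle : S <= Num.sqrt (d%:R / g) * Num.sqrt mu.
  have dg0 : 0 <= d%:R / g by rewrite divr_ge0 ?ler0n // ltW.
  rewrite -sqrtrM //.
  apply: (le_trans (ler_norm S)); rewrite -sqrtr_sqr ler_sqrt //.
  by rewrite mulr_ge0.
have SD : \sum_i Db i / q i = S + d%:R.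
  have -> : S = \sum_i (Db i / q i - 1) by apply: eq_bigr => i _; field.
  by rewrite sumrB sumr_const card_ord subrK.
have sq2 : Num.sqrt (d%:R / g) / T%:R <= Num.sqrt (d%:R / (g * T%:R)).
  have -> : d%:R / (g * T%:R) = d%:R / g * T%:R^-1.
    by field; rewrite Tn gt_eqF.
  have dg0 : 0 <= d%:R / g by rewrite divr_ge0 ?ler0n // ltW.
  rewrite (sqrtrM _ dg0); apply: ler_wpM2l; first exact: sqrtr_ge0.
  by apply: le_x_sqrt; rewrite invr_ge0 ltW //= invf_le1.
have sqm0 : 0 <= Num.sqrt mu by rewrite sqrtr_ge0.
rewrite ler0_norm; last first.
  rewrite subr_le0 ler_pdivlMr ?exprn_gt0 // expr2 mulrA mulVf // mul1r //.
have -> : - (T%:R^-1 - (\sum_t N t) / T%:R ^+ 2) =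
   ((\sum_t N t) / T%:R - 1) / T%:R by field.
apply: le_trans (_ : (S + d%:R - 1) / T%:R <= _).
  rewrite ler_pM2r ?invr_gt0 // lerD2r -SD ler_pdivrMr // mulrC //.
rewrite -addrA mulrDl lerD2r.
apply: le_trans (_ : Num.sqrt (d%:R / g) * Num.sqrt mu / T%:R <= _).
  by rewrite ler_pM2r ?invr_gt0.
by rewrite mulrAC ler_wpM2r.
Qed.
End RealPart.

Section Quantum.
Variable R : realType.
Local Notation C := R[i].

Lemma sum_delta n (i : 'I_n) (F : 'I_n -> C) :
  \sum_k (k == i)%:R * F k = F i.
Proof.
rewrite (bigD1 i) //= eqxx mul1r big1 ?addr0 // => k /negbTE ->.
by rewrite mul0r.
Qed.

Lemma sum_delta_r n (i : 'I_n) (F : 'I_n -> C) :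
  \sum_k F k * (k == i)%:R = F i.
Proof. by rewrite -(sum_delta i F); apply: eq_bigr => k _; rewrite mulrC. Qed.

Lemma sum_ffun_prod d T (F : 'I_T -> 'I_d -> C) :
  \sum_(x : tidx d T) \prod_r F r (x r) = \prod_r \sum_a F r a.
Proof. by rewrite bigA_distr_bigA. Qed.

Lemma sum_ffun_prod2 d T (F : 'I_T -> 'I_d -> 'I_d -> C) :
  \sum_(x : tidx d T) \sum_(y : tidx d T) \prod_r F r (x r) (y r) =
  \prod_r \sum_a \sum_b F r a b.
Proof.
under [LHS]eq_bigr => x _ do rewrite -(bigA_distr_bigA (fun r b => F r (x r) b)).
by rewrite -(bigA_distr_bigA (fun r a => \sum_b F r a b)).
Qed.

Lemma Pentry d (U A : 'M[C]_d) i j :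
  (adjmx U *m A *m U) i j = \sum_a \sum_b Num.conj (U a i) * A a b * U b j.
Proof.
rewrite /adjmx !mxE exchange_big /=; apply: eq_bigr => b _.
rewrite mxE mulr_suml; apply: eq_bigr => a _; by rewrite !mxE.
Qed.

Lemma prod_split2 T (s t : 'I_T) (G : 'I_T -> C) : s != t ->
  \prod_r G r = G s * G t * \prod_(r | (r != s) && (r != t)) G r.
Proof.
move=> st; rewrite (bigD1 s) //= (bigD1 t) /=; last by rewrite eq_sym.
by rewrite mulrA.
Qed.

Lemma expect_idop d T (rho : 'I_T -> 'M[C]_d) :
  (forall r, \tr (rho r) = 1) -> expect (tensor_state rho) (@idop R d T) = 1.
Proof.
move=> tr1; rewrite /expect /tensor_state /idop.
transitivity (\sum_(x : tidx d T) \prod_r rho r (x r) (x r)).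
  apply: eq_bigr => x _; rewrite (bigD1 x) //= eqxx mulr1 [X in _ + X]big1 ?addr0 //.
  by move=> y /negbTE; rewrite eq_sym => ->; rewrite mulr0.
rewrite (sum_ffun_prod (fun r a => rho r a a)).
by rewrite big1 // => r _; rewrite -(tr1 r).
Qed.


Lemma expect_Cst d T (U : 'M[C]_d) (q : 'I_d -> R) (rho : 'I_T -> 'M[C]_d)
  (s t : 'I_T) : (forall r, \tr (rho r) = 1) -> s != t ->
  expect (tensor_state rho) (Cst U q s t) =
  \sum_i \sum_j ((((q i + q j) / 2)%:C)%C)^-1 *
     ((adjmx U *m rho s *m U) i j * (adjmx U *m rho t *m U) j i).
Proof.
move=> tr1 st.
have ts : (t == s) = false by rewrite eq_sym; apply: negbTE.
pose K i j := ((((q i + q j) / 2)%:C)%C)^-1.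
pose H i j r a b := rho r a b * (if r == s then Num.conj (U a i) * U b j
   else if r == t then Num.conj (U a j) * U b i else (b == a)%:R).
have step x y : tensor_state rho x y * Cst U q s t y x =
    \sum_i \sum_j K i j * \prod_r H i j r (x r) (y r).
  rewrite /tensor_state /Cst /Cop2.
  have ind : (if [forall r, ((r != s) && (r != t)) ==> (y r == x r)] then 1 else 0)
      = \prod_(r | (r != s) && (r != t)) (y r == x r)%:R :> C.
    case: ifP => [/forallP h | /negbT /forallPn [r]].
      by rewrite big1 // => r /(implyP (h r)) /eqP ->; rewrite eqxx.
    rewrite negb_imply => /andP [hr /negbTE hne].
    by rewrite (bigD1 r) //= hne mul0r.
  rewrite ind mulr_suml mulr_sumr; apply: eq_bigr => i _.
  rewrite mulr_suml mulr_sumr; apply: eq_bigr => j _.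
  rewrite /H big_split /= (prod_split2 _ st) (prod_split2 _ st) /= eqxx ts eqxx.
  have -> : \prod_(r | (r != s) && (r != t)) (if r == s then Num.conj (U (x r) i) * U (y r) j
      else if r == t then Num.conj (U (x r) j) * U (y r) i else (y r == x r)%:R)
      = \prod_(r | (r != s) && (r != t)) (y r == x r)%:R :> C.
    by apply: eq_bigr => r /andP [/negbTE -> /negbTE ->].
  rewrite /K; ring.
rewrite /expect.
transitivity (\sum_(x : tidx d T) \sum_(y : tidx d T) \sum_i \sum_j
    K i j * \prod_r H i j r (x r) (y r)).
  by apply: eq_bigr => x _; apply: eq_bigr => y _; apply: step.
under eq_bigr => x _ do rewrite exchange_big /=.
rewrite exchange_big /=; apply: eq_bigr => i _.
under eq_bigr => x _ do rewrite exchange_big /=.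
rewrite exchange_big /=; apply: eq_bigr => j _.
under eq_bigr => x _ do rewrite -mulr_sumr.
rewrite -mulr_sumr (sum_ffun_prod2 (H i j)); congr (_ * _).
rewrite (prod_split2 _ st) [X in _ * X]big1 ?mulr1; last first.
  move=> r /andP [/negbTE rs /negbTE rt]; rewrite /H rs rt.
  transitivity (\tr (rho r)); last exact: tr1 r.
  rewrite /mxtrace; apply: eq_bigr => a _.
  by rewrite sum_delta_r.
rewrite !Pentry; congr (_ * _).
  apply: eq_bigr => a _; apply: eq_bigr => b _; rewrite /H eqxx; ring.
apply: eq_bigr => a _; apply: eq_bigr => b _; rewrite /H ts eqxx; ring.
Qed.


Lemma expect_Mop d T (U : 'M[C]_d) (q : 'I_d -> R) (vr : top R d T) :
  expect vr (Mop U q) = ((T%:R - 1) / T%:R) *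
   (('C(T, 2))%:R^-1 * (\sum_(s < T) \sum_(t < T | (s < t)%N) expect vr (Cst U q s t))
    - expect vr (@idop R d T)).
Proof.
rewrite /expect /Mop.
set c := (T%:R - 1) / T%:R; set b := ('C(T, 2))%:R^-1.
transitivity (\sum_x \sum_y ((c * b) * (\sum_(s < T) \sum_(t < T | (s < t)%N)
   vr x y * Cst U q s t y x) - c * (vr x y * @idop R d T y x))).
  apply: eq_bigr => x _; apply: eq_bigr => y _.
  rewrite !mulr_sumr; under [in RHS]eq_bigr => s _ do rewrite !mulr_sumr.
  rewrite mulrBr mulrBr; congr (_ - _); last by ring.
  rewrite !mulr_sumr; apply: eq_bigr => s _; rewrite !mulr_sumr.
  by apply: eq_bigr => t _; ring.
under eq_bigr => x _ do rewrite sumrB.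
rewrite sumrB mulrBr; congr (_ - _); last first.
  by rewrite mulr_sumr; apply: eq_bigr => x _; rewrite mulr_sumr.
under eq_bigr => x _ do rewrite -mulr_sumr.
rewrite -mulr_sumr mulrA; congr (_ * _).
under eq_bigr => x _ do rewrite exchange_big /=.
rewrite exchange_big /=; apply: eq_bigr => s _.
under eq_bigr => x _ do rewrite exchange_big /=.
by rewrite exchange_big.
Qed.


Lemma sum_upper T (F : 'I_T -> 'I_T -> C) : (forall s t, F s t = F t s) ->
  2 * \sum_(s < T) \sum_(t < T | (s < t)%N) F s t = \sum_s \sum_t F s t - \sum_s F s s.
Proof.
move=> Fs.
have E (s : 'I_T) : \sum_t F s t = \sum_(t < T) (if (s < t)%N then F s t else 0)
    + \sum_(t < T) (if (t < s)%N then F s t else 0) + F s s.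
  rewrite -big_split /= (bigD1 s) //= addrC; congr (_ + _).
  rewrite [in RHS](bigD1 s) //= ltnn addr0.
  rewrite add0r; apply: eq_bigr => t ts; move: ts; rewrite -val_eqE /=.
  by case: ltngtP => h //=; rewrite ?addr0 ?add0r.
under [in RHS]eq_bigr => s _ do rewrite E.
rewrite !big_split /= addrK.
have -> : \sum_(s < T) \sum_(t < T) (if (t < s)%N then F s t else 0) =
          \sum_(s < T) \sum_(t < T) (if (s < t)%N then F s t else 0).
  rewrite exchange_big /=; apply: eq_bigr => s _; apply: eq_bigr => t _.
  by rewrite Fs.
rewrite mulr2n mulrDl !mul1r.
by under eq_bigr => s _ do rewrite big_mkcond.
Qed.


Lemma adjmxM m n p (A : 'M[C]_(m, n)) (B : 'M[C]_(n, p)) :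
  adjmx (A *m B) = adjmx B *m adjmx A.
Proof. by rewrite /adjmx trmx_mul map_mxM. Qed.

Lemma adjmxK m n (A : 'M[C]_(m, n)) : adjmx (adjmx A) = A.
Proof. by rewrite /adjmx trmxCK. Qed.

Lemma adjmxE m n (A : 'M[C]_(m, n)) i j : adjmx A i j = Num.conj (A j i).
Proof. by rewrite /adjmx !mxE. Qed.

Lemma herm_entry n (P : 'M[C]_n) i j : adjmx P = P -> P j i = Num.conj (P i j).
Proof. by move=> h; rewrite -{1}h adjmxE. Qed.

Lemma form2 n (P : 'M[C]_n) i j (a b : C) :
  (adjmx (\col_k ((k == i)%:R * a + (k == j)%:R * b)) *m P
     *m (\col_k ((k == i)%:R * a + (k == j)%:R * b))) 0 0 =
  Num.conj a * a * P i i + Num.conj a * b * P i j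
  + Num.conj b * a * P j i + Num.conj b * b * P j j.
Proof.
rewrite mxE.
transitivity (\sum_l (Num.conj a * P i l + Num.conj b * P j l) *
                      ((l == i)%:R * a + (l == j)%:R * b)).
  apply: eq_bigr => l _; rewrite !mxE; congr (_ * _).
  transitivity (\sum_k ((k == i)%:R * (Num.conj a * P k l)
                      + (k == j)%:R * (Num.conj b * P k l))).
    apply: eq_bigr => k _; rewrite adjmxE mxE rmorphD !rmorphM /= !conjC_nat.
    ring.
  by rewrite big_split /= !sum_delta.
transitivity (\sum_l ((l == i)%:R * ((Num.conj a * P i l + Num.conj b * P j l) * a)
     + (l == j)%:R * ((Num.conj a * P i l + Num.conj b * P j l) * b))).
  by apply: eq_bigr => l _; ring.
rewrite big_split /= !sum_delta; ring.
Qed.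


Lemma quad_minor (p r n : R) :
  (forall x y, 0 <= x * x * p + 2 * x * y * n + y * y * n * r) ->
  0 <= p -> 0 <= r -> 0 <= n -> n <= p * r.
Proof.
move=> h p0 r0 n0.
have [pz|pp] := eqVneq p 0.
  have := h (r + 1) (-1); rewrite pz; move=> h1.
  nra.
have pp' : 0 < p by rewrite lt0r pp.
have := h n (- p) => h1.
have h2 : 0 <= p * (n * (p * r - n)).
  by have -> : p * (n * (p * r - n)) = n * n * p + 2 * n * - p * n + - p * - p * n * r by ring.
rewrite pmulr_rge0 // in h2.
have [nz|np] := eqVneq n 0; first by rewrite nz mulr_ge0.
have np' : 0 < n by rewrite lt0r np.
by rewrite pmulr_rge0 // subr_ge0 in h2.
Qed.

Lemma mulcc (z : C) : z * Num.conj z = ((complex.Re z) ^+ 2 + (complex.Im z) ^+ 2)%:C%C.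
Proof. by case: z => a b; apply/eqP; rewrite eq_complex /=; apply/andP; split; apply/eqP; ring. Qed.

Lemma normc2 (z : C) : ComplexField.Normc.normc z ^+ 2 = (complex.Re z) ^+ 2 + (complex.Im z) ^+ 2.
Proof. by case: z => a b /=; rewrite sqr_sqrtr // addr_ge0 ?sqr_ge0. Qed.

Lemma conj_real (x : R) : Num.conj (x%:C%C) = x%:C%C :> C.
Proof. by apply/eqP; rewrite eq_complex /= oppr0 !eqxx. Qed.

Lemma ge0_real (z : C) : 0 <= z -> z = (complex.Re z)%:C%C /\ 0 <= complex.Re z.
Proof.
rewrite lecE /= => /andP [/eqP h1 h2]; split; last exact: h2.
by case: z h1 h2 => a b /= ->.
Qed.


Lemma psd_diag n (P : 'M[C]_n) :
  (forall v : 'cV[C]_n, 0 <= (adjmx v *m P *m v) 0 0) ->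
  forall i, P i i = (complex.Re (P i i))%:C%C /\ 0 <= complex.Re (P i i).
Proof.
move=> psd i; apply: ge0_real.
have := psd (\col_k ((k == i)%:R * 1 + (k == i)%:R * 0)).
by rewrite form2 conjC1 conjC0 !mulr0 !mul0r !mulr1 !mul1r !addr0.
Qed.

Lemma psd_minor n (P : 'M[C]_n) : adjmx P = P ->
  (forall v : 'cV[C]_n, 0 <= (adjmx v *m P *m v) 0 0) ->
  forall i j, ComplexField.Normc.normc (P i j) ^+ 2 <=
     complex.Re (P i i) * complex.Re (P j j).
Proof.
move=> herm psd i j.
have [Pii p0] := psd_diag psd i.
have [Pjj r0] := psd_diag psd j.
set p := complex.Re (P i i) in Pii p0 *; set r := complex.Re (P j j) in Pjj r0 *.
rewrite normc2; set nn := _ + _.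
have n0 : 0 <= nn by rewrite addr_ge0 ?sqr_ge0.
have Pji : P j i = Num.conj (P i j) by apply: herm_entry.
have zz : P i j * Num.conj (P i j) = nn%:C%C by rewrite mulcc.
apply: quad_minor => // x y.
have := psd (\col_k ((k == i)%:R * x%:C%C + (k == j)%:R * (y%:C%C * Num.conj (P i j)))).
rewrite form2 Pji rmorphM /= !conj_real conjCK.
rewrite [P i i]Pii [P j j]Pjj.
have -> : x%:C%C * x%:C%C * p%:C%C + x%:C%C * (y%:C%C * Num.conj (P i j)) * P i j +
  y%:C%C * P i j * x%:C%C * Num.conj (P i j) +
  y%:C%C * P i j * (y%:C%C * Num.conj (P i j)) * r%:C%C
  = (x * x * p + 2 * x * y * nn + y * y * nn * r)%:C%C.
  rewrite !rmorphD !rmorphM /= -zz rmorph_nat; ring.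
by rewrite ler0c.
Qed.


Lemma unitary_adj d (U : 'M[C]_d) : U \is unitarymx -> adjmx U *m U = 1%:M.
Proof. by move=> /unitarymxP h; apply: mulmx1C. Qed.

Lemma col_orth d (U : 'M[C]_d) k i : U \is unitarymx ->
  adjmx (col k U) *m col i U = ((k == i)%:R)%:M :> 'M[C]_1.
Proof.
move=> /unitary_adj UU; apply/matrixP => a b; rewrite !ord1.
have := congr1 (fun M : 'M[C]_d => M k i) UU; rewrite !mxE => <-.
by apply: eq_bigr => l _; rewrite !mxE.
Qed.

Lemma q_facts d (sigma U : 'M[C]_d) (q : 'I_d -> R) :
  is_state sigma -> \rank sigma = d -> U \is unitarymx ->
  sigma = \sum_i ((q i)%:C)%C *: (col i U *m adjmx (col i U)) ->
  (forall i, 0 < q i) /\ \sum_i q i = 1.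
Proof.
case=> [herm psd tr1] rk Uu sdef.
have sv k : sigma *m col k U = ((q k)%:C)%C *: col k U.
  rewrite sdef mulmx_suml (bigD1 k) //= big1 ?addr0.
    by rewrite -scalemxAl -mulmxA col_orth // eqxx mul_mx_scalar scale1r.
  move=> i /negbTE ik.
  by rewrite -scalemxAl -mulmxA col_orth // ik mul_mx_scalar scale0r scaler0.
have form k : (adjmx (col k U) *m sigma *m col k U) 0 0 = ((q k)%:C)%C.
  by rewrite -mulmxA sv -scalemxAr col_orth // eqxx !mxE eqxx mulr1.
split.
  move=> k; rewrite lt0r; apply/andP; split; last first.
    by have := psd (col k U); rewrite form ler0c.
  apply/negP => /eqP qk.
  have sunit : sigma \in unitmx by rewrite -row_full_unit /row_full rk.
  have c0 : col k U = 0.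
    by rewrite -(mulKmx sunit (col k U)) sv qk scale0r mulmx0.
  have := col_orth k k Uu; rewrite c0 mulmx0 eqxx => /matrixP /(_ 0 0).
  by rewrite !mxE eqxx /= => /eqP; rewrite eq_sym oner_eq0.
apply: complexI; rewrite rmorph_sum /= rmorph1 -tr1 sdef raddf_sum /=.
apply: eq_bigr => i _; rewrite mxtraceZ mxtrace_mulC col_orth // eqxx.
by rewrite mxtrace_scalar mulr1.
Qed.


Lemma ReD (x y : C) : complex.Re (x + y) = complex.Re x + complex.Re y.
Proof. by case: x => a b; case: y. Qed.

Lemma Re_sum I (r : seq I) (P : pred I) (F : I -> C) :
  complex.Re (\sum_(i <- r | P i) F i) = \sum_(i <- r | P i) complex.Re (F i).
Proof. exact: (big_morph (@complex.Re R) ReD). Qed.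

Lemma Re_realM (x : R) (z : C) : complex.Re (x%:C%C * z) = x * complex.Re z.
Proof. by case: z => a b /=; rewrite mul0r subr0. Qed.

Lemma normc_real (x : R) : ComplexField.Normc.normc (x%:C%C : C) = `|x|.
Proof. by rewrite /= expr0n /= addr0 sqrtr_sqr. Qed.

Lemma conj_state d (U A : 'M[C]_d) : U \is unitarymx -> is_state A ->
  [/\ adjmx (adjmx U *m A *m U) = adjmx U *m A *m U,
      (forall v : 'cV[C]_d, 0 <= (adjmx v *m (adjmx U *m A *m U) *m v) 0 0) &
      \sum_i complex.Re ((adjmx U *m A *m U) i i) = 1].
Proof.
move=> Uu [herm psd tr1]; split.
- by rewrite !adjmxM adjmxK herm mulmxA.
- by move=> v; rewrite -!mulmxA !mulmxA -adjmxM -mulmxA.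
- rewrite -Re_sum.
  have -> : \sum_i (adjmx U *m A *m U) i i = \tr (adjmx U *m A *m U) by [].
  rewrite mxtrace_mulC mulmxA (unitarymxP Uu) mul1mx tr1 //.
Qed.

Lemma sum_ge_diag n (f : 'I_n -> 'I_n -> R) : (forall i j, 0 <= f i j) ->
  \sum_i f i i <= \sum_i \sum_j f i j.
Proof.
move=> f0; apply: ler_sum => i _; rewrite (bigD1 i) //= lerDl.
by apply: sumr_ge0 => j _.
Qed.

Lemma w_le (a b : R) : 0 < a -> 0 < b -> 2 / (a + b) <= (a^-1 + b^-1) / 2.
Proof.
move=> a0 b0.
have ab : 0 < a + b by rewrite addr_gt0.
rewrite ler_pdivrMr // mulrC mulrA ler_pdivlMr //.
have -> : (a + b) * (a^-1 + b^-1) = 2 + (a / b + b / a) by field; rewrite !gt_eqF.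
have : 2 <= a / b + b / a.
  rewrite -subr_ge0.
  have -> : a / b + b / a - 2 = (a - b) ^+ 2 / (a * b) by field; rewrite !gt_eqF.
  by rewrite divr_ge0 ?sqr_ge0 // mulr_ge0 // ltW.
move=> h; lra.
Qed.

End Quantum.

Lemma bin2_mul n : ('C(n, 2) * 2 = n * n.-1)%N.
Proof.
elim: n => // n IH; rewrite binS bin1 mulnDl IH.
by case: n {IH} => //= n; rewrite !mulSn !mulnS !addnA addnC; ring.
Qed.

Theorem proposition8p6 (R : realType) (d T : nat)
  (sigma : 'M[R[i]]_d) (U : 'M[R[i]]_d) (q : 'I_d -> R) (gamma : R)
  (rho : 'I_T -> 'M[R[i]]_d) :
  is_state sigma ->
  \rank sigma = d ->
  U \is unitarymx ->
  sigma = \sum_(i < d) ((q i)%:C)%C *: (col i U *m adjmx (col i U)) ->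
  (exists i, gamma = q i) -> (forall i, gamma <= q i) ->
  (2 <= T)%N ->
  (forall t, is_state (rho t)) ->
  let varrho := tensor_state rho in
  let rhobar := (T%:R)^-1 *: \sum_(t < T) rho t in
  let mu := chi2_div U q rhobar in
  ComplexField.Normc.normc (expect varrho (Mop U q) - (mu%:C)%C)
    <= Num.sqrt (d%:R / (gamma * T%:R)) * Num.sqrt mu + (d%:R - 1) / T%:R.
Proof.
move=> st rk Uu sdef [i0 g_eq] g_le T2 rst; cbv zeta.
set varrho := tensor_state rho.
set rhobar := (T%:R)^-1 *: \sum_(t < T) rho t.
set mu := chi2_div U q rhobar.
have [qp sq] := q_facts st rk Uu sdef.
have g0 : 0 < gamma by rewrite g_eq.
have tr1 r : \tr (rho r) = 1 by case: (rst r).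
pose P t := adjmx U *m rho t *m U.
have Pherm t : adjmx (P t) = P t by case: (conj_state Uu (rst t)).
have Ppsd t : forall v : 'cV[R[i]]_d, 0 <= (adjmx v *m P t *m v) 0 0.
  by case: (conj_state Uu (rst t)).
have Ptr t : \sum_i complex.Re (P t i i) = 1 by case: (conj_state Uu (rst t)).
pose K i j := ((((q i + q j) / 2)%:C)%C)^-1 : R[i].
pose X s t := \sum_i \sum_j K i j * (P s i j * P t j i).
have EM : expect varrho (Mop U q) = ((T%:R - 1) / T%:R) *
   (('C(T, 2))%:R^-1 * (\sum_(s < T) \sum_(t < T | (s < t)%N) X s t) - 1).
  rewrite expect_Mop expect_idop //; congr (_ * (_ * _ - _)).
  apply: eq_bigr => s _; apply: eq_bigr => t hst; apply: expect_Cst => //.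
  by rewrite -val_eqE /= neq_ltn hst.
have Ksym i j : K i j = K j i by rewrite /K addrC.
have Xsym s t : X s t = X t s.
  rewrite /X exchange_big /=; apply: eq_bigr => i _; apply: eq_bigr => j _.
  by rewrite [K i j]Ksym; ring.
have Xup : \sum_(s < T) \sum_(t < T | (s < t)%N) X s t =
    (\sum_s \sum_t X s t - \sum_s X s s) / 2.
  by rewrite -(sum_upper Xsym); field.
pose w i j := 2 / (q i + q j) : R.
have Kw i j : K i j = (w i j)%:C%C by rewrite /K /w -fmorphV invf_div.
pose nc (z : R[i]) := ComplexField.Normc.normc z.
have zz z : z * Num.conj z = ((nc z) ^+ 2)%:C%C by rewrite mulcc /nc normc2.
pose N t := \sum_i \sum_j w i j * nc (P t i j) ^+ 2.
have XN t : X t t = (N t)%:C%C.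
  rewrite /X /N rmorph_sum; apply: eq_bigr => i _; rewrite rmorph_sum.
  apply: eq_bigr => j _; rewrite Kw (herm_entry i j (Pherm t)) zz /w !rmorphM //.
have Tn : (T%:R : R) != 0 by rewrite pnatr_eq0; case: T T2 {rho rst tr1 P Pherm Ppsd Ptr X EM Xsym Xup XN N varrho rhobar mu}.
have TnC : (T%:R : R[i]) != 0 by rewrite pnatr_eq0; case: T T2 {rho rst tr1 P Pherm Ppsd Ptr X EM Xsym Xup XN N varrho rhobar mu Tn}.
pose Pb := adjmx U *m rhobar *m U.
have Pbe i j : Pb i j = (T%:R)^-1 * \sum_t P t i j.
  rewrite /Pb /rhobar -scalemxAr -scalemxAl mxE; congr (_ * _).
  by rewrite mulmx_sumr mulmx_suml summxE.
have PbH i j : Pb j i = Num.conj (Pb i j).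
  rewrite !Pbe rmorphM rmorph_sum /= fmorphV rmorph_nat; congr (_ * _).
  by apply: eq_bigr => t _; apply: herm_entry.
have mu1 : mu + 1 = \sum_i \sum_j w i j * nc (Pb i j) ^+ 2.
  by rewrite /mu /chi2_div subrK.
have Xall : \sum_s \sum_t X s t = ((T%:R ^+ 2 * (mu + 1))%:C)%C.
  transitivity (\sum_i \sum_j K i j * ((\sum_s P s i j) * (\sum_t P t j i))).
    rewrite /X.
    under eq_bigr => s _ do rewrite exchange_big /=.
    rewrite exchange_big /=; apply: eq_bigr => i _.
    under eq_bigr => s _ do rewrite exchange_big /=.
    rewrite exchange_big /=; apply: eq_bigr => j _.
    rewrite big_distrlr /= mulr_sumr; apply: eq_bigr => s _.
    by rewrite mulr_sumr.
  rewrite mu1 rmorphM rmorph_sum /= mulr_sumr; apply: eq_bigr => i _.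
  rewrite rmorph_sum /= mulr_sumr; apply: eq_bigr => j _.
  have E1 a b : \sum_t P t a b = T%:R * Pb a b by rewrite Pbe mulrA mulfV // mul1r.
  rewrite !E1 (PbH i j) Kw.
  have -> : (w i j)%:C%C * (T%:R * Pb i j * (T%:R * Num.conj (Pb i j))) =
     (w i j)%:C%C * T%:R ^+ 2 * (Pb i j * Num.conj (Pb i j)) by ring.
  by rewrite zz !rmorphM rmorph_nat; ring.
set rr := (T%:R - 1) / T%:R * (('C(T, 2))%:R^-1 *
   ((T%:R ^+ 2 * (mu + 1) - \sum_t N t) / 2) - 1) - mu : R.
have Ereal : expect varrho (Mop U q) - (mu%:C)%C = (rr%:C)%C.
  rewrite EM Xup Xall.
  under eq_bigr => s _ do rewrite XN.
  rewrite -rmorph_sum /rr.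
  by rewrite !(rmorphB, rmorphM, fmorphV, rmorph_nat, rmorphD, rmorph1, rmorphXn) /=.
rewrite Ereal normc_real.
have binR : ('C(T, 2))%:R = T%:R * (T%:R - 1) / 2 :> R.
  have h := congr1 (fun n => n%:R : R) (bin2_mul T); rewrite /= !natrM in h.
  have T1 : (1 <= T)%N by case: T T2 {rho rst tr1 P Pherm Ppsd Ptr X EM Xsym Xup XN N varrho rhobar mu Tn TnC Pb Pbe PbH mu1 Xall rr Ereal h}.
  have Tm1 : ((T.-1)%:R : R) = T%:R - 1 by rewrite -subn1 natrB.
  apply: (@mulIf _ 2); first by rewrite pnatr_eq0.
  by rewrite h Tm1; field.
have T1n : (T%:R - 1 : R) != 0 by rewrite subr_eq0 pnatr_eq1 gtn_eqF.
have rrE : rr = T%:R^-1 - (\sum_t N t) / T%:R ^+ 2.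
  by rewrite /rr binR; field; rewrite Tn T1n.
rewrite rrE.
have wii i : w i i = (q i)^-1.
  by rewrite /w; field; rewrite !gt_eqF ?addr_gt0.
have w0 i j : 0 <= w i j by rewrite divr_ge0 // ltW // addr_gt0.
have diagle (z : R[i]) i : complex.Re z ^+ 2 / q i <= w i i * nc z ^+ 2.
  rewrite wii /nc normc2 [_ * (_ + _)]mulrC ler_pM2r ?invr_gt0 //.
  by rewrite lerDl sqr_ge0.
apply: (@final_real R d T q gamma (fun t i => complex.Re (P t i i)) N mu T2 g0 g_le sq Ptr).
- move=> t.
  have f0 i j : 0 <= w i j * nc (P t i j) ^+ 2 by rewrite mulr_ge0 ?sqr_ge0.
  apply: le_trans (@sum_ge_diag R d (fun i j => w i j * nc (P t i j) ^+ 2) f0).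
  by apply: ler_sum => i _; apply: diagle.
- move=> t.
  set D := fun i => complex.Re (P t i i).
  have D0 i : 0 <= D i by case: (psd_diag (Ppsd t) i).
  have minor i j : nc (P t i j) ^+ 2 <= D i * D j.
    exact: (psd_minor (Pherm t) (Ppsd t)).
  apply: (@le_trans _ _ (\sum_i \sum_j w i j * (D i * D j))).
    apply: ler_sum => i _; apply: ler_sum => j _.
    by apply: ler_wpM2l.
  apply: (@le_trans _ _ (\sum_i \sum_j ((q i)^-1 + (q j)^-1) / 2 * (D i * D j))).
    apply: ler_sum => i _; apply: ler_sum => j _.
    by apply: ler_wpM2r; [rewrite mulr_ge0 | apply: w_le].
  pose Y i j := (q i)^-1 * D i * D j.
  have -> : \sum_i \sum_j ((q i)^-1 + (q j)^-1) / 2 * (D i * D j) =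
      (\sum_i \sum_j Y i j + \sum_i \sum_j Y j i) / 2.
    rewrite -big_split mulr_suml; apply: eq_bigr => i _.
    rewrite -big_split mulr_suml; apply: eq_bigr => j _; rewrite /Y /=; rewrite !mulrDl; congr (_ + _); rewrite mulrAC -!mulrA; congr (_ * _); rewrite mulrC -!mulrA; congr (_ * _); rewrite mulrC //.
  rewrite [X in _ + X]exchange_big /=.
  have -> : \sum_i \sum_j Y i j = \sum_i D i / q i.
    apply: eq_bigr => i _; rewrite /Y -mulr_sumr.
    have -> : \sum_j D j = 1 by exact: Ptr.
    by rewrite mulr1 mulrC.
  have h2 : forall x : R, (x + x) / 2 = x by move=> x; field.
  by rewrite h2.
- rewrite mu1.
  have f0 i j : 0 <= w i j * nc (Pb i j) ^+ 2 by rewrite mulr_ge0 ?sqr_ge0.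
  apply: le_trans (@sum_ge_diag R d (fun i j => w i j * nc (Pb i j) ^+ 2) f0).
  apply: ler_sum => i _.
  have ReP : complex.Re (Pb i i) = T%:R^-1 * \sum_t complex.Re (P t i i).
    rewrite Pbe -Re_sum.
    have -> : (T%:R^-1 : R[i]) = ((T%:R^-1 : R)%:C)%C by rewrite fmorphV rmorph_nat.
    by rewrite Re_realM.
  by rewrite -ReP; apply: diagle.
Qed.
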